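(* Let $G=(B\cup W,E)$ be a bipartite graph (an instance of Bipartite Influence), and let $B_0\subseteq B$ and $W_0\subseteq W$. Then $Ls(G)\leq Ls(G\setminus W_0)+|W_0|$, $Rs(G)\geq Rs(G\setminus B_0)-|B_0|$, $Ls(G)\geq Ls(G\setminus B_0)-|B_0|$, and $Rs(G)\leq Rs(G\setminus W_0)+|W_0|$.
   Context: Bipartite Influence is a two-player game (Left and Right) played on a bipartite graph $G=(B\cup W,E)$ whose vertices in $B$ are black and in $W$ white, every edge joining $B$ and $W$. Isolated vertices are credited to the owner of their colour (black to Left, white to Right) and removed. On her turn Left chooses a black vertex $x$ and removes $Rmv(G,x)$, consisting of $x$, its neighbours, and the vertices that become isolated after removing these; Right does the same with a white vertex. The score is (number of vertices credited to/removed by Left) minus (number credited to/removed by Right). Formally, if $G$ has no edges its value is $|B|-|W|$; otherwise $Ls(G)=\max_{x\in B\text{ non-isolated}}\{|Rmv(G,x)|+Rs(G\setminus Rmv(G,x))\}$ and $Rs(G)=\min_{y\in W\text{ non-isolated}}\{-|Rmv(G,y)|+Ls(G\setminus Rmv(G,y))\}$, where isolated vertices of $G$ contribute $|I_B|-|I_W|$ (black minus white isolated vertices) to both scores. $Ls$ (resp. $Rs$) is the optimal final score when Left (resp. Right) moves first. $G\setminus X$ denotes the subgraph induced on the remaining vertices. *)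

(* Defs.v *)
From HB Require Import structures.
From mathcomp Require Import all_boot all_order all_algebra.
Set Implicit Arguments. Unset Strict Implicit. Unset Printing Implicit Defensive.
Import Order.TTheory GRing.Theory Num.Theory.
Local Open Scope ring_scope.

(* A bipartite graph: vertex type T (finite), colouring [black] (black x =
   true: x in B; false: x in W), adjacency relation [e].  A position of the
   game is the induced subgraph on a vertex set S : {set T}. *)
Section Influence.
Variables (T : finType) (black : pred T) (e : rel T).

Definition has_nbr (S : {set T}) (x : T) : bool := [exists y in S, e x y].

Definition isoS (S : {set T}) : {set T} := [set x in S | ~~ has_nbr S x].

Definition coreS (S : {set T}) : {set T} := S :\: isoS S.

Definition credit (S : {set T}) : int :=
  (#|[set x in S | black x]|%:Z - #|[set x in S | ~~ black x]|%:Z)%R.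

Definition nbhd (S : {set T}) (x : T) : {set T} := x |: [set y in S | e x y].

Definition Rmv (S : {set T}) (x : T) : {set T} :=
  nbhd S x :|: isoS (S :\: nbhd S x).

(* score n left S : optimal score of G[S] with [left] to move (Left if true),
   computed with recursion fuel n. *)
Fixpoint score (n : nat) (left : bool) (S : {set T}) : int :=
  let C := coreS S in
  (credit (isoS S) +
  match n with
  | 0%N => 0
  | n'.+1 =>
    let A := [set x in C | black x == left] in
    let f := fun x => ((if left then 1 else -1) * #|Rmv C x|%:Z
                       + score n' (~~ left) (C :\: Rmv C x))%R in
    match [pick x in A] with
    | None => 0
    | Some x0 =>
        if left then \big[Order.max/f x0]_(x in A) f x
        else \big[Order.min/f x0]_(x in A) f x
    end
  end)%R.

(* Fuel #|S| suffices: every move removes at least one vertex. *)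
Definition Ls (S : {set T}) : int := score #|S| true S.
Definition Rs (S : {set T}) : int := score #|S| false S.

End Influence.

(* Main.v *)
Require Import Defs.
From HB Require Import structures.
From mathcomp Require Import all_boot all_order all_algebra.
From mathcomp Require Import zify.
Import Order.TTheory GRing.Theory Num.Theory.
Local Open Scope ring_scope.
Set Implicit Arguments. Unset Strict Implicit. Unset Printing Implicit Defensive.


Section Gen.
Variables (I : finType) (A : {set I}) (f : I -> int).

Lemma my_bigmax_ge_seq z r x : x \in r -> x \in A ->
  f x <= \big[Num.max/z]_(i <- r | i \in A) f i.
Proof.
elim: r => [//|a r IH]; rewrite in_cons big_cons => /orP [/eqP -> ->|xr xA].
  by rewrite le_max lexx.
case: ifP => _; last exact: IH.
by rewrite le_max IH ?orbT.
Qed.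

Lemma my_bigmax_ge z x : x \in A -> f x <= \big[Num.max/z]_(i in A) f i.
Proof. by move=> xA; apply: my_bigmax_ge_seq => //; rewrite mem_index_enum. Qed.

Lemma my_bigmin_le_seq z r x : x \in r -> x \in A ->
  \big[Num.min/z]_(i <- r | i \in A) f i <= f x.
Proof.
elim: r => [//|a r IH]; rewrite in_cons big_cons => /orP [/eqP -> ->|xr xA].
  by rewrite ge_min lexx.
case: ifP => _; last exact: IH.
by rewrite ge_min IH ?orbT.
Qed.

Lemma my_bigmin_le z x : x \in A -> \big[Num.min/z]_(i in A) f i <= f x.
Proof. by move=> xA; apply: my_bigmin_le_seq => //; rewrite mem_index_enum. Qed.

Lemma my_bigmax_ex x0 : x0 \in A ->
  exists2 x, x \in A & \big[Num.max/f x0]_(i in A) f i = f x.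
Proof.
move=> x0A.
apply: (big_ind (fun v => exists2 x, x \in A & v = f x)).
- by exists x0.
- move=> u v [a aA ->] [b bA ->].
  case: (leP (f a) (f b)) => _; [by exists b | by exists a].
- by move=> i iA; exists i.
Qed.

Lemma my_bigmin_ex x0 : x0 \in A ->
  exists2 x, x \in A & \big[Num.min/f x0]_(i in A) f i = f x.
Proof.
move=> x0A.
apply: (big_ind (fun v => exists2 x, x \in A & v = f x)).
- by exists x0.
- move=> u v [a aA ->] [b bA ->].
  case: (leP (f a) (f b)) => _; [by exists a | by exists b].
- by move=> i iA; exists i.
Qed.

End Gen.


Ltac lia' := repeat match goal with H : _ |- _ => clear H end; repeat match goal with H := _ |- _ => clearbody H end; lia.

Section Graph.
Variables (T : finType) (black : pred T) (e : rel T).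
Hypothesis e_sym : symmetric e.
Hypothesis e_bip : forall x y, e x y -> black x != black y.

Implicit Types (S X : {set T}) (l : bool).
Local Notation iso := (isoS e).
Local Notation core := (coreS e).
Local Notation nb := (nbhd e).
Local Notation cr := (credit black).
Local Notation sc := (score black e).

Lemma e_irr x : e x x = false.
Proof. by apply/negP => /e_bip; rewrite eqxx. Qed.

Lemma has_nbrP (S : {set T}) x : reflect (exists2 y, y \in S & e x y) (has_nbr e S x).
Proof. by apply: (iffP existsP) => [[y /andP [? ?]]|[y ? ?]]; exists y => //; apply/andP. Qed.

Lemma in_iso S x : (x \in iso S) = (x \in S) && ~~ has_nbr e S x.
Proof. by rewrite /isoS inE. Qed.

Lemma in_core S x : (x \in core S) = (x \in S) && has_nbr e S x.
Proof. by rewrite /coreS !inE; case: (x \in S); case: (has_nbr e S x). Qed.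

Lemma core_sub S : core S \subset S.
Proof. by apply/subsetP => x; rewrite in_core => /andP []. Qed.

Lemma iso_subS S : iso S \subset S.
Proof. by apply/subsetP => x; rewrite in_iso => /andP []. Qed.

Lemma core_free S x : x \in core S -> has_nbr e (core S) x.
Proof.
rewrite in_core => /andP [xS /has_nbrP [y yS exy]].
apply/has_nbrP; exists y => //; rewrite in_core yS; apply/has_nbrP.
by exists x; rewrite // e_sym.
Qed.

Lemma iso_core S : iso (core S) = set0.
Proof.
apply/setP => x; rewrite in_iso in_set0; case xc: (x \in core S) => //=.
by rewrite core_free.
Qed.

Lemma core_core S : core (core S) = core S.
Proof. by rewrite {1}/coreS iso_core setD0. Qed.

Lemma cr0 : cr set0 = 0.
Proof.
rewrite /credit.
have -> : [set x in set0 | black x] = set0 :> {set T} by apply/setP => x; rewrite !inE.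
have -> : [set x in set0 | ~~ black x] = set0 :> {set T} by apply/setP => x; rewrite !inE.
by rewrite cards0.
Qed.

Lemma pick_none (S : {set T}) (l : bool) : #|S| = 0%N ->
  [pick x in [set x0 in core S | black x0 == l]] = None.
Proof.
move=> /eqP; rewrite cards_eq0 => /eqP ->.
case: pickP => // x; rewrite inE in_core in_set0 //.
Qed.

Definition Aset (l : bool) (S : {set T}) := [set x in core S | black x == l].
Definition optv n (l : bool) (S : {set T}) x :=
  (if l then 1 else -1) * #|Rmv e (core S) x|%:Z
  + sc n (~~ l) (core S :\: Rmv e (core S) x).
Definition bestv n (l : bool) (S : {set T}) :=
  match [pick x in Aset l S] with
  | None => 0
  | Some x0 => if l then \big[Num.max/optv n l S x0]_(x in Aset l S) optv n l S x
               else \big[Num.min/optv n l S x0]_(x in Aset l S) optv n l S x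
  end.

Lemma scE n l S : sc n.+1 l S = cr (iso S) + bestv n l S.
Proof. by []. Qed.

Lemma sc0 l S : sc 0 l S = cr (iso S).
Proof. by rewrite /= addr0. Qed.

Lemma rm_lt (S : {set T}) x : x \in S -> (#|S :\: Rmv e S x| < #|S|)%N.
Proof.
move=> xS; apply: proper_card; rewrite properEneq subsetDl andbT.
apply/negP => /eqP /setP /(_ x); rewrite in_setD xS /Rmv in_setU /nbhd in_setU1 eqxx /=.
by [].
Qed.

Lemma sc_fuel n (S : {set T}) (l : bool) : (#|S| <= n)%N -> sc n.+1 l S = sc n l S.
Proof.
elim: n S l => [|n IH] S l hS.
  by rewrite /= pick_none //; apply/eqP; rewrite -leqn0.
rewrite scE [RHS]scE; congr (_ + _).
rewrite /bestv; case: pickP => [x0 x0A|//].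
have E : forall x, x \in Aset l S -> optv n.+1 l S x = optv n l S x.
  move=> x; rewrite inE => /andP [xc _]; rewrite /optv IH //.
  have := rm_lt xc; have := subset_leq_card (core_sub S); lia.
rewrite (E x0 x0A).
by case: l E x0A => E x0A; apply: eq_bigr => x xA; rewrite E.
Qed.

Definition V (l : bool) (S : {set T}) := sc #|S| l S.

Lemma sc_V n (S : {set T}) l : (#|S| <= n)%N -> sc n l S = V l S.
Proof.
move=> h; rewrite /V -(subnK h); elim: (n - #|S|)%N => // k IH.
by rewrite addSn sc_fuel ?IH // leq_addl.
Qed.

Lemma sc_K1 n l S : sc n l S = cr (iso S) + sc n l (core S).
Proof.
case: n => [|n]; first by rewrite !sc0 iso_core cr0 addr0.
by rewrite !scE iso_core cr0 add0r /bestv /Aset /optv core_core.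
Qed.

Lemma V_K1 l S : V l S = cr (iso S) + V l (core S).
Proof.
by rewrite {1}/V sc_K1 [sc _ _ (core S)]sc_V // subset_leq_card // core_sub.
Qed.

Lemma cr_split (A I : {set T}) : I \subset A -> cr A = cr I + cr (A :\: I).
Proof.
move=> sIA; rewrite /credit.
have H : forall P : pred T, #|[set x in A | P x]| = (#|[set x in I | P x]| + #|[set x in A :\: I | P x]|)%N.
  move=> P; rewrite -(cardsID I [set x in A | P x]); f_equal; apply: eq_card => x; rewrite !inE; case xI: (x \in I); rewrite ?andbT ?andbF //=.
    by rewrite (subsetP sIA).
rewrite (H black) (H (fun x => ~~ black x)) !PoszD; lia.
Qed.

Lemma has_nbr_rm (X I : {set T}) v : I \subset iso X -> v \in X ->
  has_nbr e (X :\: I) v = has_nbr e X v.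
Proof.
move=> sI vX; apply/has_nbrP/has_nbrP => [[y]|[y yX evy]].
  by rewrite inE => /andP [_ yX] evy; exists y.
exists y => //; rewrite inE yX andbT; apply/negP => /(subsetP sI).
rewrite in_iso yX /= => /has_nbrP; apply; exists v => //; by rewrite e_sym.
Qed.

Lemma iso_rm (X I : {set T}) : I \subset iso X -> iso (X :\: I) = iso X :\: I.
Proof.
move=> sI; apply/setP => v; rewrite !(in_iso, in_setD).
case vI: (v \in I) => //=; case vX: (v \in X) => //=.
by rewrite has_nbr_rm.
Qed.

Lemma core_rm (X I : {set T}) : I \subset iso X -> core (X :\: I) = core X.
Proof.
move=> sI; apply/setP => v; rewrite !(in_core, in_setD).
case vI: (v \in I) => /=.
  have := subsetP sI v vI; rewrite in_iso => /andP [-> /negbTE ->].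
  by rewrite andbF.
by case vX: (v \in X) => //=; rewrite has_nbr_rm.
Qed.

Lemma V_K2 l (X I : {set T}) : I \subset iso X -> V l X = cr I + V l (X :\: I).
Proof.
move=> sI; rewrite V_K1 [V l (X :\: I)]V_K1 iso_rm // core_rm //.
by rewrite (cr_split sI) -addrA.
Qed.

Definition optV (l : bool) (S : {set T}) x :=
  (if l then 1 else -1) * #|Rmv e (core S) x|%:Z
  + V (~~ l) (core S :\: Rmv e (core S) x).

Lemma Aset_core l S x : x \in Aset l S -> x \in core S.
Proof. by rewrite inE => /andP []. Qed.

Lemma optvV n l S x : #|S| = n.+1 -> x \in Aset l S -> optv n l S x = optV l S x.
Proof.
move=> hS /Aset_core xc; rewrite /optv /optV sc_V //.
have := rm_lt xc; have := subset_leq_card (core_sub S); lia.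
Qed.

Lemma V_unf l S : (0 < #|S|)%N ->
  exists n, #|S| = n.+1 /\ V l S = cr (iso S) + bestv n l S.
Proof.
rewrite /V; case: #|S| => // n _; exists n; split => //; exact: scE.
Qed.

Lemma Aset_pos l S x : x \in Aset l S -> (0 < #|S|)%N.
Proof. by move=> /Aset_core /(subsetP (core_sub S)) xS; apply/card_gt0P; exists x. Qed.

Lemma VL_ge S x : x \in Aset true S -> cr (iso S) + optV true S x <= V true S.
Proof.
move=> xA; have [n [hS ->]] := V_unf true (Aset_pos xA).
rewrite lerD2l /bestv; case: pickP => [x0 x0A|/(_ x)]; last by rewrite xA.
rewrite -(optvV hS xA); exact: my_bigmax_ge.
Qed.

Lemma VR_le S x : x \in Aset false S -> V false S <= cr (iso S) + optV false S x.
Proof.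
move=> xA; have [n [hS ->]] := V_unf false (Aset_pos xA).
rewrite lerD2l /bestv; case: pickP => [x0 x0A|/(_ x)]; last by rewrite xA.
rewrite -(optvV hS xA) /=. exact: my_bigmin_le.
Qed.

Lemma V_ex l S x : x \in Aset l S ->
  exists2 y, y \in Aset l S & V l S = cr (iso S) + optV l S y.
Proof.
move=> xA; have [n [hS ->]] := V_unf l (Aset_pos xA).
rewrite /bestv; case: pickP => [x0 x0A|/(_ x)]; last by rewrite xA.
case: l xA x0A => xA x0A.
  have [y yA ->] := my_bigmax_ex (optv n true S) x0A.
  by exists y => //; rewrite (optvV hS yA).
have [y yA ->] := my_bigmin_ex (optv n false S) x0A.
by exists y => //; rewrite (optvV hS yA).
Qed.

Lemma V_none l S : (forall x, x \in Aset l S -> False) -> V l S = cr (iso S).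
Proof.
move=> h; case: (posnP #|S|) => [h0|hp].
  by rewrite /V h0 sc0.
have [n [hS ->]] := V_unf l hp.
by rewrite /bestv; case: pickP => [x0 /h //|_]; rewrite addr0.
Qed.

Lemma in_nb S x v : (v \in nb S x) = (v == x) || (v \in S) && e x v.
Proof. by rewrite /nbhd in_setU1 inE. Qed.

Lemma in_Rmv S x v : (v \in Rmv e S x) = (v \in nb S x) || (v \in iso (S :\: nb S x)).
Proof. by rewrite /Rmv in_setU. Qed.

Lemma iso_mono X X' v : X' \subset X -> v \in X' -> v \in iso X -> v \in iso X'.
Proof.
move=> sX vX'; rewrite !in_iso vX' => /andP [_ h]; apply/negP => /has_nbrP [u uX evu].
by move/negP: h; apply; apply/has_nbrP; exists u => //; apply: (subsetP sX).
Qed.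

Lemma isoP X v : reflect (v \in X /\ forall u, u \in X -> e v u -> False) (v \in iso X).
Proof.
rewrite in_iso; apply: (iffP andP) => [[vX /has_nbrP h]|[vX h]]; split => //.
  by move=> u uX evu; apply: h; exists u.
by apply/negP => /has_nbrP [u uX evu]; apply: (h u).
Qed.

Lemma coreP X v : reflect (v \in X /\ exists2 u, u \in X & e v u) (v \in core X).
Proof.
rewrite in_core; apply: (iffP andP) => [[vX /has_nbrP h]|[vX h]]; split => //.
by apply/has_nbrP.
Qed.

Lemma in_sep (A : {set T}) (P : pred T) v : (v \in [set u in A | P u]) = (v \in A) && P v.
Proof. by rewrite inE. Qed.

Definition wh X := #|[set v in X | ~~ black v]|.
Definition bl X := #|[set v in X | black v]|.

Lemma crE X : cr X = (bl X)%:Z - (wh X)%:Z.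
Proof. by []. Qed.

Lemma card_bw X : #|X| = (bl X + wh X)%N.
Proof.
rewrite -(cardsID [set v | black v] X) /bl /wh; f_equal; apply: eq_card => v;
by rewrite !inE // andbC.
Qed.

Lemma cr_black X : (forall v, v \in X -> black v) -> cr X = #|X|%:Z.
Proof.
move=> h; rewrite crE card_bw.
have -> : wh X = 0%N.
  apply/eqP; rewrite cards_eq0; apply/eqP/setP => v; rewrite !inE.
  by apply/negP => /andP [/h -> ].
by rewrite addn0 subr0.
Qed.

Lemma cr_white X : (forall v, v \in X -> ~~ black v) -> cr X = - #|X|%:Z.
Proof.
move=> h; rewrite crE card_bw.
have -> : bl X = 0%N.
  apply/eqP; rewrite cards_eq0; apply/eqP/setP => v; rewrite !inE.
  by apply/negP => /andP [/h /negP].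
by rewrite add0n sub0r.
Qed.

Lemma cr1 v : cr [set v] = if black v then 1 else -1.
Proof.
case bv: (black v).
  by rewrite cr_black ?cards1 // => u; rewrite inE => /eqP ->.
by rewrite cr_white ?cards1 // => u; rewrite inE => /eqP ->; rewrite bv.
Qed.

Lemma V0 l : V l set0 = 0.
Proof.
rewrite /V cards0 sc0.
have -> : iso set0 = set0 by apply/setP => v; rewrite in_iso in_set0.
exact: cr0.
Qed.

Lemma V_rm1 l X v : v \in iso X -> V l X = cr [set v] + V l (X :\ v).
Proof. by move=> vi; apply: V_K2; rewrite sub1set. Qed.

Lemma wh_sub X X' : X' \subset X ->
  (forall v, v \in iso X -> ~~ black v -> v \in X') -> (wh (iso X) <= wh (iso X'))%N.
Proof.
move=> sX h; apply: subset_leq_card; apply/subsetP => v; rewrite in_sep => /andP [vi vw].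
by rewrite in_sep vw andbT; apply: iso_mono sX (h v vi vw) vi.
Qed.

Lemma wh_sub1 X X' w : X' \subset X ->
  (forall v, v \in iso X -> ~~ black v -> v != w -> v \in X') ->
  (wh (iso X) <= (wh (iso X')).+1)%N.
Proof.
move=> sX h; apply: leq_trans (_ : #|w |: [set v in iso X' | ~~ black v]| <= _)%N.
  apply: subset_leq_card; apply/subsetP => v; rewrite in_sep => /andP [vi vw].
  rewrite in_setU1; case: eqP => //= /eqP vnw.
  by rewrite in_sep vw andbT; apply: iso_mono sX (h v vi vw vnw) vi.
by rewrite cardsU1; case: (w \in _).
Qed.

Lemma bl_sub X X' : X' \subset X ->
  (forall v, v \in iso X -> black v -> v \in X') -> (bl (iso X) <= bl (iso X'))%N.
Proof.
move=> sX h; apply: subset_leq_card; apply/subsetP => v; rewrite in_sep => /andP [vi vw].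
by rewrite in_sep vw andbT; apply: iso_mono sX (h v vi vw) vi.
Qed.

Lemma cardsDU (A B : {set T}) : [disjoint A & B] -> #|A :|: B| = (#|A| + #|B|)%N.
Proof. by rewrite -setI_eq0 cardsU => /eqP ->; rewrite cards0 subn0. Qed.

Lemma core_freeE C : iso C = set0 -> core C = C.
Proof. by move=> h; rewrite /coreS h setD0. Qed.

Lemma Rmv_card C x : #|Rmv e C x| = (#|nb C x| + #|iso (C :\: nb C x)|)%N.
Proof.
rewrite /Rmv cardsDU // -setI_eq0; apply/eqP/setP => v; rewrite in_setI in_set0.
apply/negP => /andP [vn /(subsetP (iso_subS _))]; by rewrite in_setD vn.
Qed.

Lemma Rmv_rest C x : C :\: Rmv e C x = core (C :\: nb C x).
Proof.
apply/setP => v; rewrite /coreS !in_setD in_Rmv.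
by case: (v \in nb C x); case: (v \in iso _); case: (v \in C).
Qed.

Lemma optL_nice C x : iso C = set0 ->
  optV true C x = #|nb C x|%:Z + 2 * (wh (iso (C :\: nb C x)))%:Z + V false (C :\: nb C x).
Proof.
move=> hC; rewrite /optV /= core_freeE // Rmv_card Rmv_rest.
rewrite [V false (C :\: nb C x)]V_K1 crE (card_bw (iso _)); lia.
Qed.

Lemma optR_nice C x : iso C = set0 ->
  optV false C x = - #|nb C x|%:Z - 2 * (bl (iso (C :\: nb C x)))%:Z + V true (C :\: nb C x).
Proof.
move=> hC; rewrite /optV /= core_freeE // Rmv_card Rmv_rest.
rewrite [V true (C :\: nb C x)]V_K1 crE (card_bw (iso _)); lia.
Qed.

Definition claimA S := forall w, w \in S -> ~~ black w -> V true S <= V true (S :\ w) + 1.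
Definition claimB S := forall w, w \in S -> ~~ black w -> V false S <= V false (S :\ w) + 1.
Definition claimLR S := V false S <= V true S.

Lemma lt_card_sub X (Y : {set T}) (y : T) : X \subset Y -> y \in Y -> y \notin X -> (#|X| < #|Y|)%N.
Proof.
move=> sXY yY yX; apply: proper_card; rewrite properE sXY /=.
by apply/negP => /subsetP /(_ y yY); rewrite (negbTE yX).
Qed.

Lemma nbr_col x v : e x v -> black v = ~~ black x.
Proof. by move/e_bip; case: (black x); case: (black v). Qed.

Lemma in_Aset l S v : (v \in Aset l S) = (v \in core S) && (black v == l).
Proof. exact: in_sep. Qed.

Section Core.
Variables (C : {set T}) (w : T).
Hypotheses (hC : iso C = set0) (wC : w \in C) (ww : ~~ black w).

Lemma freeC v : v \in C -> exists2 u, u \in C & e v u.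
Proof.
move=> vC; have : v \notin iso C by rewrite hC in_set0.
by rewrite in_iso vC /= negbK => /has_nbrP.
Qed.

Lemma N_prop v : v \in iso (C :\ w) ->
  [/\ v \in C, v != w, black v, e v w & forall u, u \in C -> e v u -> u = w].
Proof.
move/isoP => [vD h]; move: vD; rewrite in_setD1 => /andP [vw vC].
have only : forall u, u \in C -> e v u -> u = w.
  move=> u uC evu; apply/eqP; apply/negP => /negP uw.
  by apply: (h u) => //; rewrite in_setD1 uw.
have [u uC evu] := freeC vC.
have uw := only u uC evu; subst u.
have ewv : e w v by rewrite e_sym.
by split => //; rewrite (nbr_col ewv) ww.
Qed.

Lemma inC' v : (v \in core (C :\ w)) = [&& v \in C, v != w & v \notin iso (C :\ w)].
Proof.
rewrite /coreS in_setD in_setD1.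
by case: (v \in C); case: (v != w); case: (v \in iso _).
Qed.

Lemma VD l : V l (C :\ w) = #|iso (C :\ w)|%:Z + V l (core (C :\ w)).
Proof.
rewrite V_K1 cr_black // => v /N_prop [].
by [].
Qed.

Lemma C'_lt : (#|core (C :\ w)| < #|C|)%N.
Proof.
apply: (lt_card_sub (y := w)) => //.
  apply/subsetP => v; rewrite inC' => /andP [] //.
by rewrite inC' eqxx andbF.
Qed.

Lemma N_notw : w \notin iso (C :\ w).
Proof. by apply/negP => /N_prop [_ /eqP]. Qed.

Lemma A_core (IHB : forall Q : {set T}, (#|Q| < #|C|)%N -> claimB Q)
  (IHLR : forall X, (#|X| < #|C|)%N -> claimLR X) :
  V true C <= V true (C :\ w) + 1.
Proof.
have [u uC ewu] := freeC wC.
have bu : black u by rewrite (nbr_col ewu) ww.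
have uA : u \in Aset true C by rewrite in_Aset core_freeE // uC bu.
have [x xA ->] := V_ex uA.
rewrite hC cr0 add0r VD.
move: xA; rewrite in_Aset core_freeE // => /andP [xC /eqP bx].
set N := iso (C :\ w).
case xN: (x \in N).
- have [_ xw _ exw xonly] := N_prop xN.
  rewrite optL_nice //.
  set Q := C :\: nb C x.
  have nbx : (#|nb C x| <= 2)%N.
    apply: leq_trans (_ : #|[set x; w]| <= 2)%N; last by rewrite cards2; case: (x != w).
    apply: subset_leq_card; apply/subsetP => v; rewrite in_nb !inE.
    by case: (v == x) => //= /andP [vC exv]; rewrite (xonly v vC exv) eqxx.
  have whQ : wh (iso Q) = 0%N.
    apply/eqP; rewrite cards_eq0; apply/eqP/setP => v; rewrite in_sep in_set0.
    apply/negP => /andP [/isoP [vQ h] wv].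
    move: (vQ); rewrite in_setD in_nb => /andP [vn vC].
    have [u' u'C evu'] := freeC vC.
    have bu' : black u' by rewrite (nbr_col evu') (negbTE wv).
    apply: (h u') => //.
    rewrite in_setD in_nb u'C andbT negb_or negb_and.
    have -> : (e x u') = false by apply/negP => /nbr_col; rewrite bx bu'.
    rewrite orbT andbT; apply/eqP => ux; subst u'.
    have vw : v = w by apply: xonly => //; rewrite e_sym.
    by subst v; move: vn; rewrite exw wC orbT.
  have sub1 : N :\ x \subset iso Q.
    apply/subsetP => v; rewrite in_setD1 => /andP [vx vN].
    have [vC vw bv evw vonly] := N_prop vN.
    apply/isoP; split.
      rewrite in_setD in_nb vC (negbTE vx) andbT /=.
      by apply/negP => /nbr_col; rewrite bx bv.
    move=> z; rewrite in_setD in_nb => /andP [zn zC] evz.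
    have zw := vonly z zC evz; subst z.
    by move: zn; rewrite exw wC orbT.
  have eqQ : Q :\: (N :\ x) = core (C :\ w).
    apply/setP => v; rewrite inC' !in_setD in_set1 in_nb.
    case vC: (v \in C); rewrite ?andbF //= ?andbT.
    have -> : e x v = (v == w).
      apply/idP/eqP => [exv|->] //; exact: xonly.
    case: (v =P x) => [->|_]; first by rewrite (xN : x \in iso (C :\ w)) /= andbF.
    by case: (v == w); case: (v \in N).
  have VQ : V false Q = (#|N| - 1)%:Z + V false (core (C :\ w)).
    rewrite (V_K2 _ sub1) eqQ cr_black; last first.
      by move=> v; rewrite in_setD1 => /andP [_ /N_prop []].
    by rewrite (cardsD1 x N) xN add1n subn1.
  have := IHLR _ C'_lt; rewrite /claimLR.
  rewrite VQ whQ; move: nbx; rewrite (cardsD1 x N) xN; lia'.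
- have xC' : x \in core (C :\ w).
    rewrite inC' xC (negbT xN) andbT /=.
    by apply/negP => /eqP xw; subst x; move: ww; rewrite bx.
  have xA' : x \in Aset true (core (C :\ w)) by rewrite in_Aset core_core xC' bx.
  have hC' : iso (core (C :\ w)) = set0 := iso_core _.
  have := VL_ge xA'; rewrite hC' cr0 add0r.
  rewrite !optL_nice //.
  set Q := C :\: nb C x; set Q' := core (C :\ w) :\: nb (core (C :\ w)) x.
  (* neighbours of x are white, hence never in N *)
  have nbN : forall v, e x v -> v \notin N.
    by move=> v /nbr_col; rewrite bx => bv; apply/negP => /N_prop [_ _]; rewrite bv.
  have NQ : forall v, v \in N -> v \in Q.
    move=> v vN; have [vC vw bv _ _] := N_prop vN.
    rewrite in_setD in_nb vC andbT negb_or; apply/andP; split.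
      by apply/negP => /eqP vx; subst v; rewrite vN in xN.
    by rewrite andTb; apply/negP => /nbr_col; rewrite bv bx.
  have Nonly : forall v z, v \in N -> z \in C -> e v z -> z = w.
    by move=> v z /N_prop [_ _ _ _ h]; apply: h.
  case exw: (e x w).
  + have nbE : nb (core (C :\ w)) x = nb C x :\ w.
      apply/setP => v; rewrite in_setD1 !in_nb inC'.
      have xw : x != w by apply/eqP => xw; subst x; move: ww; rewrite bx.
      case: (v =P x) => [->|_] /=; first by rewrite xw.
      case evx: (e x v); rewrite ?andbF ?andbT //.
      by rewrite (nbN v evx) andbT; case: (v != w); case: (v \in C).
    have cardnb : #|nb C x| = (#|nb (core (C :\ w)) x|).+1.
      by rewrite nbE (cardsD1 w (nb C x)) in_nb wC exw orbT.
    have sub1 : N \subset iso Q.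
      apply/subsetP => v vN; apply/isoP; split; first exact: NQ.
      move=> z; rewrite in_setD in_nb => /andP [zn zC] evz.
      have zw := Nonly v z vN zC evz; subst z.
      by move: zn; rewrite exw wC orbT.
    have eqQ : Q :\: N = Q'.
      apply/setP => v; rewrite /Q' nbE /Q !in_setD !in_set1 -/N.
      case: (v =P w) => [->|_] /=; last by case: (v \in N); case: (v \in nb C x); case: (v \in C).
      by rewrite in_nb wC exw orbT /= andbF.
    have VQ : V false Q = #|N|%:Z + V false Q'.
      rewrite (V_K2 _ sub1) eqQ cr_black // => v /N_prop [] //.
    have whQ : (wh (iso Q) <= wh (iso Q'))%N.
      apply: wh_sub.
        by rewrite -eqQ subsetDl.
      move=> v vi wv; rewrite -eqQ in_setD (subsetP (iso_subS Q) v vi) andbT.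
      by apply/negP => /N_prop [_ _ bv _ _]; rewrite bv in wv.
    rewrite cardnb VQ; move: whQ; lia'.
  + have nbE : nb (core (C :\ w)) x = nb C x.
      apply/setP => v; rewrite !in_nb inC'.
      case: (v =P x) => [->|_] //=.
      case evx: (e x v); rewrite ?andbF ?andbT //.
      case vC: (v \in C) => //=; rewrite (nbN v evx) andbT.
      by apply/eqP => vw; subst v; rewrite evx in exw.
    have wQ : w \in Q.
      rewrite in_setD in_nb wC exw andbT andbF orbF.
      by apply/eqP => wx; subst x; move: ww; rewrite bx.
    have sub1 : N \subset iso (Q :\ w).
      apply/subsetP => v vN; apply/isoP; split.
        rewrite in_setD1 NQ // andbT.
        by apply/eqP => vw; subst v; move: N_notw; rewrite -/N vN.
      move=> z; rewrite in_setD1 => /andP [zw zQ] evz.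
      have zC : z \in C by move: zQ; rewrite in_setD => /andP [].
      by move: zw; rewrite (Nonly v z vN zC evz) eqxx.
    have eqQ : (Q :\ w) :\: N = Q'.
      apply/setP => v; rewrite /Q' nbE /Q !in_setD !in_set1 -/N.
      by case: (v \in N); case: (v == w); case: (v \in nb C x); case: (v \in C).
    have VQw : V false (Q :\ w) = #|N|%:Z + V false Q'.
      rewrite (V_K2 _ sub1) eqQ cr_black // => v /N_prop [] //.
    have sQ'Q : Q' \subset Q.
      by rewrite -eqQ; apply: subset_trans (subsetDl _ _) (subsetDl _ _).
    have Q'P : forall v, v \in Q -> ~~ black v -> v != w -> v \in Q'.
      move=> v vQ bv vw; rewrite -eqQ in_setD in_setD1 vw vQ andbT.
      rewrite andbT; apply/negP => /N_prop [_ _ bv' _ _]; by rewrite bv' in bv.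
    have ltQ : (#|Q| < #|C|)%N.
      apply: (lt_card_sub (y := x)) => //; first exact: subsetDl.
      by rewrite in_setD in_nb eqxx.
    rewrite nbE.
    case wi: (w \in iso Q).
    * have whQ : (wh (iso Q) <= (wh (iso Q')).+1)%N.
        apply: (wh_sub1 (w := w)) => // v vi bv vw.
        by apply: Q'P => //; apply: (subsetP (iso_subS Q)).
      rewrite (V_rm1 _ wi) cr1 (negbTE ww) VQw; move: whQ; lia'.
    * have whQ : (wh (iso Q) <= wh (iso Q'))%N.
        apply: wh_sub => // v vi bv.
        apply: Q'P => //; first by apply: (subsetP (iso_subS Q)).
        by apply/eqP => vw; subst v; rewrite vi in wi.
      have := IHB _ ltQ w wQ ww; rewrite VQw; move: whQ; lia'.
Qed.

Lemma B_core (IHA : forall P : {set T}, (#|P| < #|C|)%N -> claimA P) :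
  V false C <= V false (C :\ w) + 1.
Proof.
rewrite VD; set N := iso (C :\ w).
have Nonly : forall v z, v \in N -> z \in C -> e v z -> z = w.
  by move=> v z /N_prop [_ _ _ _ h]; apply: h.
have hC' : iso (core (C :\ w)) = set0 := iso_core _.
case: (pickP (fun y => y \in Aset false (core (C :\ w)))) => [y0 y0A|noy].
- have [y yA ->] := V_ex y0A; rewrite hC' cr0 add0r.
  move: yA; rewrite in_Aset core_core => /andP [yC' /eqP by_].
  move: (yC'); rewrite inC' => /and3P [yC yw yN].
  have yAC : y \in Aset false C by rewrite in_Aset core_freeE // yC by_.
  have := VR_le yAC; rewrite hC cr0 add0r.
  rewrite !optR_nice //.
  set P := C :\: nb C y; set P' := core (C :\ w) :\: nb (core (C :\ w)) y.
  have nbE : nb (core (C :\ w)) y = nb C y.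
    apply/setP => v; rewrite !in_nb inC'.
    case: (v =P y) => [->|_] //=.
    case evy: (e y v); rewrite ?andbF ?andbT //.
    case vC: (v \in C) => //=.
    have bv : black v by rewrite (nbr_col evy) by_.
    apply/andP; split; first by apply/eqP => vw; subst v; move: ww; rewrite bv.
    apply/negP => vN; move: yw; rewrite (Nonly v y vN yC) ?eqxx //.
    by rewrite e_sym.
  have wP : w \in P.
    rewrite in_setD in_nb wC andbT negb_or eq_sym yw /=.
    by apply/negP => /nbr_col; rewrite by_ (negbTE ww).
  have NP : forall v, v \in N -> v \in P :\ w.
    move=> v vN; have [vC vw bv evw _] := N_prop vN.
    rewrite in_setD1 vw in_setD in_nb vC andbT /= negb_or.
    apply/andP; split; first by apply/eqP => vy; subst v; rewrite bv in by_.
    apply/negP => eyv; move: yw; rewrite (Nonly v y vN yC) ?eqxx //.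
    by rewrite e_sym.
  have sub1 : N \subset iso (P :\ w).
    apply/subsetP => v vN; apply/isoP; split; first exact: NP.
    move=> z; rewrite in_setD1 => /andP [zw zP] evz.
    have zC : z \in C by move: zP; rewrite in_setD => /andP [].
    by move: zw; rewrite (Nonly v z vN zC evz) eqxx.
  have eqP' : (P :\ w) :\: N = P'.
    apply/setP => v; rewrite /P' nbE /P !in_setD !in_set1 -/N.
    by case: (v \in N); case: (v == w); case: (v \in nb C y); case: (v \in C).
  have VPw : V true (P :\ w) = #|N|%:Z + V true P'.
    rewrite (V_K2 _ sub1) eqP' cr_black // => v /N_prop [] //.
  have ltP : (#|P| < #|C|)%N.
    apply: (lt_card_sub (y := y)) => //; first exact: subsetDl.
    by rewrite in_setD in_nb eqxx.
  have blP : (bl (iso P') <= bl (iso P))%N.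
    apply: subset_leq_card; apply/subsetP => v; rewrite in_sep => /andP [vi bv].
    rewrite in_sep bv andbT; move/isoP: vi => [vP' h]; apply/isoP.
    have vPw : v \in P :\ w by move: vP'; rewrite -eqP' in_setD => /andP [].
    have vP : v \in P by move: vPw; rewrite in_setD1 => /andP [].
    have vN : v \notin N by move: vP'; rewrite -eqP' in_setD => /andP [].
    have vC : v \in C by move: vP; rewrite in_setD => /andP [].
    split => // z zP evz.
    have zw : z = w.
      case: (z =P w) => // /eqP zw; exfalso; apply: (h z) => //.
      rewrite -eqP' in_setD in_setD1 zw zP /= andbT.
      by apply/negP => /N_prop [_ _ bz _ _]; move: (nbr_col evz); rewrite bv bz.
    subst z.
    move/negP: vN; apply; apply/isoP; split; first by rewrite in_setD1 vC andbT; apply/eqP => vw; subst v; move: ww; rewrite bv.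
    move=> z; rewrite in_setD1 => /andP [zw zC] evz'.
    have bz : ~~ black z by rewrite (nbr_col evz') bv.
    have zP2 : z \in P.
      rewrite in_setD in_nb zC andbT negb_or.
      apply/andP; split.
        apply/negP => /eqP zy; subst z.
        by move: vP; rewrite in_setD in_nb vC e_sym evz' orbT.
      by apply/negP => /nbr_col; rewrite by_ (negbTE bz).
    apply: (h z) => //.
    rewrite -eqP' in_setD in_setD1 zw zP2 /= andbT.
    by apply/negP => /N_prop [_ _ bz' _ _]; rewrite bz' in bz.
  have := IHA _ ltP w wP ww; rewrite VPw nbE; move: blP; lia'.
- have C'0 : core (C :\ w) = set0.
    apply/setP => v; rewrite in_set0; apply/negP => vC'.
    case bv: (black v).
      move/has_nbrP: (core_free vC') => [u' u'C' evu'].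
      have := noy u'; rewrite in_Aset core_core u'C' /= (nbr_col evu') bv /=.
      by [].
    by have := noy v; rewrite in_Aset core_core vC' bv.
  rewrite C'0 V0.
  have wA : w \in Aset false C by rewrite in_Aset core_freeE // wC (negbTE ww).
  have := VR_le wA; rewrite hC cr0 add0r optR_nice //.
  have P0 : C :\: nb C w = set0.
    apply/setP => v; rewrite in_set0 in_setD in_nb.
    case vC: (v \in C); rewrite ?andbF // andbT negb_or.
    apply/negP => /andP [vw /negP ewv]; apply: ewv.
    have : v \in core (C :\ w) = false by rewrite C'0 in_set0.
    rewrite inC' vC vw /= => /negbFE /N_prop [_ _ _ evw _].
    by rewrite e_sym.
  rewrite P0 V0; lia'.
Qed.

End Core.

Lemma iter_rm (F : {set T} -> int) (good : pred T) n :
  (forall S v, (#|S| <= n)%N -> v \in S -> good v -> F S <= F (S :\ v) + 1) ->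
  forall (W : {set T}) S, (#|S| <= n)%N -> (forall v, v \in W -> good v) ->
  F S <= F (S :\: W) + #|W|%:Z.
Proof.
move=> H W; elim: {W}#|W| {-2}W (erefl #|W|) => [|k IH] W hW S hS hg.
  have -> : W = set0 by apply: cards0_eq.
  by rewrite setD0 cards0 addr0.
have [v vW] : exists v, v \in W by apply/card_gt0P; rewrite hW.
have hW' : #|W :\ v| = k by move: hW; rewrite (cardsD1 v W) vW add1n => [[]].
have hg' : forall u, u \in W :\ v -> good u.
  by move=> u; rewrite in_setD1 => /andP [_ /hg].
case vS: (v \in S).
  have := H S v hS vS (hg v vW).
  have hS' : (#|S :\ v| <= n)%N by apply: leq_trans hS; apply: subset_leq_card; apply: subsetDl.
  have := IH (W :\ v) hW' (S :\ v) hS' hg'.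
  have -> : (S :\ v) :\: (W :\ v) = S :\: W.
    apply/setP => u; rewrite !in_setD !in_set1.
    by case: (u =P v) => [->|_]; rewrite ?vW ?vS.
  rewrite hW hW'; lia'.
have := IH (W :\ v) hW' S hS hg'.
have -> : S :\: (W :\ v) = S :\: W.
  apply/setP => u; rewrite !in_setD !in_set1.
  by case: (u =P v) => [->|_]; rewrite ?vW ?vS.
rewrite hW hW'; lia'.
Qed.

Lemma red_core l S w : w \in core S -> V l (S :\ w) = cr (iso S) + V l (core S :\ w).
Proof.
move=> wc.
have sI : iso S \subset iso (S :\ w).
  apply/subsetP => v vi; apply: (iso_mono (X := S)) => //; first exact: subsetDl.
  rewrite in_setD1 (subsetP (iso_subS S) v vi) andbT.
  by apply/eqP => vw; subst v; move: wc; rewrite /coreS in_setD vi.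
rewrite (V_K2 _ sI); congr (_ + V l _).
apply/setP => v; rewrite /coreS !in_setD !in_set1.
by case: (v \in iso S); case: (v == w); case: (v \in S).
Qed.

Lemma LR_core C : iso C = set0 ->
  (forall X, (#|X| <= #|C|)%N -> claimB X) -> V false C <= V true C.
Proof.
move=> hC HB.
case: (pickP (fun x => x \in Aset true C)) => [x xA|nox].
- have := VL_ge xA; rewrite hC cr0 add0r optL_nice //.
  move: (xA); rewrite in_Aset core_freeE // => /andP [xC /eqP bx].
  set W := [set v in C | e x v].
  have HW : V false C <= V false (C :\: W) + #|W|%:Z.
    apply: (iter_rm (F := fun S => V false S) (good := fun v => ~~ black v) (n := #|C|)) => //.
      by move=> S v hS vS bv; exact: (HB S hS v vS bv).
    by move=> v; rewrite in_sep => /andP [_ /nbr_col]; rewrite bx => ->.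
  have xW : x \notin W by rewrite in_sep e_irr andbF.
  have xi : x \in iso (C :\: W).
    apply/isoP; split; first by rewrite in_setD xW xC.
    move=> z; rewrite in_setD => /andP [zW zC] exz.
    by move: zW; rewrite in_sep zC exz.
  have eqW : (C :\: W) :\ x = C :\: nb C x.
    apply/setP => v; rewrite !in_setD in_set1 in_sep in_nb.
    by case: (v == x); case: (v \in C); case: (e x v).
  have cnb : #|nb C x| = (#|W|).+1 by rewrite /nbhd cardsU1 xW.
  move: HW; rewrite (V_rm1 _ xi) cr1 bx eqW cnb; lia'.
- have nob : forall v, v \in C -> ~~ black v.
    move=> v vC; apply/negP => bv; have := nox v.
    by rewrite in_Aset core_freeE // vC bv.
  rewrite (V_none (l := true)); last by move=> v; rewrite nox.
  rewrite (V_none (l := false)) //.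
  move=> y; rewrite in_Aset core_freeE // => /andP [yC _].
  move: (yC); rewrite -(core_freeE hC) => /core_free /has_nbrP [u uC euy].
  rewrite core_freeE // in uC.
  have := nob u uC; rewrite (nbr_col euy) (nob y yC).
  by [].
Qed.

Lemma all_claims n : forall S, (#|S| <= n)%N -> [/\ claimA S, claimB S & claimLR S].
Proof.
elim: n => [|n IH] S hS.
  have S0 : S = set0 by apply: cards0_eq; apply/eqP; rewrite -leqn0.
  subst S; split; try by move=> w; rewrite in_set0.
  by rewrite /claimLR !V0.
have coreS_le : forall X, (#|core X| <= #|X|)%N by move=> X; apply: subset_leq_card; apply: core_sub.
have HB : forall X, (#|X| <= n.+1)%N -> claimB X.
  move=> X hX w wX ww.
  case wi: (w \in iso X).
    rewrite (V_rm1 _ wi) cr1 (negbTE ww); lia.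
  have wc : w \in core X by rewrite /coreS in_setD wi wX.
  have : V false (core X) <= V false (core X :\ w) + 1.
    apply: (B_core (iso_core X) wc ww) => P hP.
    by have [] := IH P (leq_trans hP (leq_trans (coreS_le X) hX)).
  rewrite [V false X]V_K1 (red_core _ wc); lia'.
split; last first.
- have : V false (core S) <= V true (core S).
    apply: (LR_core (iso_core S)) => X hX; apply: HB.
    exact: leq_trans hX (leq_trans (coreS_le S) hS).
  rewrite /claimLR [V false S]V_K1 [V true S]V_K1; lia'.
- exact: HB.
move=> w wS ww.
case wi: (w \in iso S).
  rewrite (V_rm1 _ wi) cr1 (negbTE ww); lia.
have wc : w \in core S by rewrite /coreS in_setD wi wS.
have : V true (core S) <= V true (core S :\ w) + 1.
  apply: (A_core (iso_core S) wc ww) => P hP.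
    by have [] := IH P (leq_trans hP (leq_trans (coreS_le S) hS)).
  by have [] := IH P (leq_trans hP (leq_trans (coreS_le S) hS)).
rewrite [V true S]V_K1 (red_core _ wc); lia'.
Qed.

End Graph.



Lemma big_opp_max (I : finType) (A : {set I}) (f : I -> int) z :
  \big[Num.max/- z]_(i in A) - f i = - \big[Num.min/z]_(i in A) f i.
Proof. by rewrite (big_morph (fun x : int => - x) (@oppr_min _) (erefl (- z))). Qed.

Lemma big_opp_min (I : finType) (A : {set I}) (f : I -> int) z :
  \big[Num.min/- z]_(i in A) - f i = - \big[Num.max/z]_(i in A) f i.
Proof. by rewrite (big_morph (fun x : int => - x) (@oppr_max _) (erefl (- z))). Qed.

Section Neg.
Variables (T : finType) (black : pred T) (e : rel T).
Local Notation nbl := (fun x => ~~ black x).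

Lemma cr_neg (X : {set T}) : credit nbl X = - credit black X.
Proof.
rewrite /credit.
have -> : [set x in X | ~~ ~~ black x] = [set x in X | black x].
  by apply/setP => x; rewrite !inE negbK.
by rewrite opprB.
Qed.

Lemma Aset_neg l (S : {set T}) : Aset nbl e l S = Aset black e (~~ l) S.
Proof.
apply/setP => x; rewrite !in_sep.
by case: (x \in coreS e S); case: (black x); case: l.
Qed.

Lemma sc_neg n l (S : {set T}) : score nbl e n l S = - score black e n (~~ l) S.
Proof.
elim: n l S => [|n IH] l S; first by rewrite !sc0 cr_neg.
rewrite !scE cr_neg [RHS]opprD; congr (_ + _).
have Eo : forall x, optv nbl e n l S x = - optv black e n (~~ l) S x.
  move=> x; rewrite /optv IH negbK.
  by case: l; rewrite /= ?mul1r ?mulN1r ?opprD ?opprK.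
rewrite /bestv Aset_neg; case: pickP => [x0 x0A|]; last by rewrite oppr0.
rewrite Eo.
have E : forall (op : int -> int -> int) z,
    \big[op/- z]_(i in Aset black e (~~ l) S) optv nbl e n l S i =
    \big[op/- z]_(i in Aset black e (~~ l) S) - optv black e n (~~ l) S i.
  by move=> op z; apply: eq_bigr => i _; rewrite Eo.
case: l E Eo x0A => E Eo x0A /=; rewrite E.
  exact: big_opp_max.
exact: big_opp_min.
Qed.

End Neg.

Unset Implicit Arguments.

Lemma bip_neg (T : finType) (black : pred T) (e : rel T)
  (e_bip : forall x y, e x y -> black x != black y) :
  forall x y, e x y -> (fun z => ~~ black z) x != (fun z => ~~ black z) y.
Proof. by move=> x y /e_bip; case: (black x); case: (black y). Qed.

Lemma arith_neg (a b : int) (k : nat) : - a <= - b + k%:Z -> b - k%:Z <= a.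
Proof. lia. Qed.

Theorem mainTheorem7 (T : finType) (black : pred T) (e : rel T)
  (e_sym : symmetric e)
  (e_bip : forall x y, e x y -> black x != black y)
  (B0 W0 : {set T})
  (hB0 : forall x, x \in B0 -> black x)
  (hW0 : forall x, x \in W0 -> ~~ black x) :
  [/\ Ls black e [set: T] <= Ls black e (~: W0) + #|W0|%:Z,
      Rs black e [set: T] >= Rs black e (~: B0) - #|B0|%:Z,
      Ls black e [set: T] >= Ls black e (~: B0) - #|B0|%:Z &
      Rs black e [set: T] <= Rs black e (~: W0) + #|W0|%:Z].
Proof.
pose nbl := fun z => ~~ black z.
have e_bip' := @bip_neg T black e e_bip.
have Hc : forall S : {set T}, [/\ claimA black e S, claimB black e S & claimLR black e S].
  by move=> S; apply: (all_claims e_sym e_bip (n := #|T|)); apply: max_card.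
have Hc' : forall S : {set T}, [/\ claimA nbl e S, claimB nbl e S & claimLR nbl e S].
  by move=> S; apply: (all_claims e_sym e_bip' (n := #|T|)); apply: max_card.
have hB0' : forall v, v \in B0 -> ~~ nbl v by move=> v /hB0; rewrite /nbl negbK.
have I1 := iter_rm (F := V black e true) (good := fun v => ~~ black v) (n := #|T|)
  (fun S v _ vS bv => let: And3 hA _ _ := Hc S in hA v vS bv) (W := W0) (S := [set: T]) (max_card _) hW0.
have I4 := iter_rm (F := V black e false) (good := fun v => ~~ black v) (n := #|T|)
  (fun S v _ vS bv => let: And3 _ hB _ := Hc S in hB v vS bv) (W := W0) (S := [set: T]) (max_card _) hW0.
have I2 := iter_rm (F := V nbl e true) (good := fun v => ~~ nbl v) (n := #|T|)
  (fun S v _ vS bv => let: And3 hA _ _ := Hc' S in hA v vS bv) (W := B0) (S := [set: T]) (max_card _) hB0'.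
have I3 := iter_rm (F := V nbl e false) (good := fun v => ~~ nbl v) (n := #|T|)
  (fun S v _ vS bv => let: And3 _ hB _ := Hc' S in hB v vS bv) (W := B0) (S := [set: T]) (max_card _) hB0'.
move: I1 I2 I3 I4; rewrite /V /nbl !sc_neg /= !setTD /Ls /Rs => I1 I2 I3 I4.
split => //.
- exact: arith_neg I2.
- exact: arith_neg I3.
Qed.
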